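(* Let $m=2$, $\mu = (\mu_1,\mu_2)^\top\in\mathbb{R}^2$, and let $M = \begin{bmatrix} M_{11} & M_{12}\\ M_{12} & M_{22}\end{bmatrix}$ be a symmetric positive semidefinite matrix that is row-stochastic (non-negative entries, each row summing to $1$). Let $z\sim\mathcal{N}(\mu, M)$ and $p = (p_1,p_2) := \mathrm{softmax}(z)$. Let $q' = (1,0)^\top$ and $p' := M^\top q' = (M_{11}, M_{12})^\top$. Define $\alpha_{\mathrm{TLI}} := \min\{p_1,1\} + \min\{p_2, 0\}$ and $\alpha_{\mathrm{RDK}} := \min\{p_1, p'_1\} + \min\{p_2, p'_2\}$. Assume $\mu_1 + 3\sqrt{M_{11}} \le \mu_2 - 3\sqrt{M_{22}}$. Then, with probability at least $99.46\%$ over $z$, \[ \alpha_{\mathrm{TLI}} \le \alpha_{\mathrm{RDK}} . \]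
   Context: $\mathrm{softmax}(z)_i = \exp(z_i)/(\exp(z_1)+\exp(z_2))$. Here $\alpha_{\mathrm{TLI}}$ is the acceptance rate $\sum_x \min\{p(x), q'(x)\}$ between $p$ and the TLI drafter $q'$, and $\alpha_{\mathrm{RDK}}$ is the acceptance rate between $p$ and the redistributed drafter $p'$. *)

(* Defs.v *)
From HB Require Import structures.
From mathcomp Require Import all_boot all_order all_algebra.
From mathcomp Require Import all_classical all_reals all_analysis.
Set Implicit Arguments. Unset Strict Implicit. Unset Printing Implicit Defensive.
Import Order.TTheory GRing.Theory Num.Theory.
Local Open Scope ring_scope.

Definition softmax1 {R : realType} (z1 z2 : R) : R := expR z1 / (expR z1 + expR z2).
Definition softmax2 {R : realType} (z1 z2 : R) : R := expR z2 / (expR z1 + expR z2).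

Definition std_gauss2 {R : realType} : set (R * R) -> \bar R :=
  ((normal_prob (0:R) 1) \x (normal_prob (0:R) 1))%E.

(* Main.v *)
Require Import Defs.
From HB Require Import structures.
From mathcomp Require Import all_boot all_order all_algebra.
From mathcomp Require Import all_classical all_reals all_analysis.
From mathcomp Require Import measurable_realfun ring lra.
Import Order.TTheory GRing.Theory Num.Theory.
Local Open Scope ring_scope.
Local Open Scope classical_set_scope.

Section S.
Context {R : realType}.
Local Open Scope ereal_scope.
Notation mu := (@lebesgue_measure R).

Lemma integral_normal01 (f : R -> \bar R) : (forall x, 0 <= f x) ->
  measurable_fun [set: R] f ->
  \int[normal_prob 0 1]_x f x = \int[mu]_x (f x * (normal_pdf 0 1 x)%:E).
Proof.
move=> f0 mf.
rewrite -(Radon_Nikodym_SigmaFinite.change_of_variables (normal_prob_dominates 0 1))//.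
apply: ae_eq_integral => //.
- apply: emeasurable_funM => //.
  exact: measurable_int (Radon_Nikodym_SigmaFinite.f_integrable (normal_prob_dominates 0 1)).
- apply: emeasurable_funM => //; apply/measurable_EFinP; exact: measurable_normal_pdf.
- apply: ae_eqe_mul2l.
  apply: integral_ae_eq => //.
  + exact: (Radon_Nikodym_SigmaFinite.f_integrable (normal_prob_dominates 0 1)).
  + apply/measurable_EFinP; exact: measurable_normal_pdf.
  + move=> E _ mE.
    by rewrite -Radon_Nikodym_SigmaFinite.f_integral//; last exact: normal_prob_dominates.
Qed.

Lemma mgf01 (b : R) : \int[normal_prob 0 1]_x (expR (b * x))%:E = (expR (b ^+ 2 / 2))%:E.
Proof.
have mb : measurable_fun [set: R] (fun x : R => (expR (b * x))%:E).
  apply/measurable_EFinP; apply: measurableT_comp; first exact: measurable_expR.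
  by apply: measurable_funM.
rewrite integral_normal01; [|by move=> x; rewrite lee_fin expR_ge0|exact: mb].
transitivity (\int[mu]_x ((expR (b^+2/2))%:E * (normal_pdf b 1 x)%:E)).
  apply: eq_integral => x _; rewrite -!EFinM; congr EFin.
  rewrite /normal_pdf oner_eq0 /= /normal_fun.
  rewrite mulrCA [RHS]mulrCA; congr (_ * _)%R; rewrite -!expRD; congr expR.
  by rewrite expr1n subr0; field.
transitivity ((expR (b^+2/2))%:E * \int[mu]_x (normal_pdf b 1 x)%:E).
  apply: ge0_integralZl => //.
  - by apply/measurable_EFinP; exact: measurable_normal_pdf.
  - by move=> x _; rewrite lee_fin normal_pdf_ge0.
by rewrite integral_normal_pdf mule1.
Qed.

Notation N := (normal_prob (0:R) 1).

Lemma mgf2 (a b : R) :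
  \int[(N \x N)%E]_g (expR (a * g.1 + b * g.2))%:E = (expR (a ^+ 2 / 2 + b ^+ 2 / 2))%:E.
Proof.
rewrite fubini_tonelli1; last 2 first.
- apply/measurable_EFinP; apply: measurableT_comp; first exact: measurable_expR.
  by apply: measurable_funD; apply: measurable_funM => //; first [exact: measurable_fst|exact: measurable_snd].
- by move=> x; rewrite lee_fin expR_ge0.
transitivity (\int[N]_x ((expR (b^+2/2))%:E * (expR (a*x))%:E)).
  apply: eq_integral => x _; rewrite /fubini_F /=.
  transitivity (\int[N]_y ((expR (a*x))%:E * (expR (b*y))%:E)).
    by apply: eq_integral => y _; rewrite -EFinM -expRD.
  rewrite ge0_integralZl //.
  - by rewrite mgf01 muleC.
  - apply/measurable_EFinP; apply: measurableT_comp; first exact: measurable_expR.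
    by apply: measurable_funM.
transitivity ((expR (b^+2/2))%:E * \int[N]_x (expR (a*x))%:E).
  apply: ge0_integralZl => //.
  - apply/measurable_EFinP; apply: measurableT_comp; first exact: measurable_expR.
    by apply: measurable_funM.
by rewrite mgf01 -EFinM -expRD addrC.
Qed.

Local Close Scope ereal_scope.

Lemma sm1E (u v : R) : softmax1 u v = expR (u - ln (expR u + expR v)).
Proof. by rewrite /softmax1 expRD expRN lnK // posrE addr_gt0 ?expR_gt0. Qed.
Lemma sm2E (u v : R) : softmax2 u v = expR (v - ln (expR u + expR v)).
Proof. by rewrite /softmax2 expRD expRN lnK // posrE addr_gt0 ?expR_gt0. Qed.

Lemma meas_sm d (T : measurableType d) (f g : T -> R) :
  measurable_fun setT f -> measurable_fun setT g ->
  measurable_fun setT (fun x => softmax1 (f x) (g x)) /\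
  measurable_fun setT (fun x => softmax2 (f x) (g x)).
Proof.
move=> mf mg.
have mL : measurable_fun setT (fun x => ln (expR (f x) + expR (g x))).
  apply: measurableT_comp; first exact: measurable_ln.
  by apply: measurable_funD; apply: measurableT_comp => //; exact: measurable_expR.
split.
- rewrite (_ : (fun x => _) = (fun x => expR (f x - ln (expR (f x) + expR (g x))))); last first.
    by apply/funext => x; rewrite sm1E.
  apply: measurableT_comp; first exact: measurable_expR.
  exact: measurable_funB.
- rewrite (_ : (fun x => _) = (fun x => expR (g x - ln (expR (f x) + expR (g x))))); last first.
    by apply/funext => x; rewrite sm2E.
  apply: measurableT_comp; first exact: measurable_expR.
  exact: measurable_funB.
Qed.

Lemma pointwise (u v a b : R) : u <= v -> 1/2 <= a -> 0 <= b ->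
  Order.min (softmax1 u v) 1 + Order.min (softmax2 u v) 0 <=
  Order.min (softmax1 u v) a + Order.min (softmax2 u v) b.
Proof.
move=> uv ha hb.
have e1 := expR_gt0 u; have e2 := expR_gt0 v.
have euv : expR u <= expR v by rewrite ler_expR.
have s1h : softmax1 u v <= 1/2.
  rewrite /softmax1 ler_pdivrMr ?addr_gt0 //; lra.
have s10 : 0 <= softmax1 u v by rewrite /softmax1 divr_ge0 // ltW ?addr_gt0.
have s20 : 0 <= softmax2 u v by rewrite /softmax2 divr_ge0 // ltW ?addr_gt0.
rewrite (min_l (_ : softmax1 u v <= 1)); last lra.
rewrite (min_r s20) (min_l (_ : softmax1 u v <= a)); last lra.
rewrite addr0 lerDl le_min s20 hb //.
Qed.
End S.

Theorem theorem3 (R : realType) (mu1 mu2 M11 M12 M22 : R)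
  (l11 l12 l21 l22 : R) :
  (* entries non-negative *)
  0 <= M11 -> 0 <= M12 -> 0 <= M22 ->
  (* rows sum to 1 *)
  M11 + M12 = 1 -> M12 + M22 = 1 ->
  (* positive semidefinite *)
  (forall x1 x2 : R, 0 <= x1 * (M11 * x1 + M12 * x2) + x2 * (M12 * x1 + M22 * x2)) ->
  (* L L^T = M *)
  l11 * l11 + l12 * l12 = M11 ->
  l11 * l21 + l12 * l22 = M12 ->
  l21 * l21 + l22 * l22 = M22 ->
  mu1 + 3 * Num.sqrt M11 <= mu2 - 3 * Num.sqrt M22 ->
  ((9946 / 10000)%:E <=
    std_gauss2 [set g : R * R |
      (      let z1 := mu1 + l11 * g.1 + l12 * g.2 in
      let z2 := mu2 + l21 * g.1 + l22 * g.2 in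
      let p1 := softmax1 z1 z2 in
      let p2 := softmax2 z1 z2 in
      Order.min p1 1 + Order.min p2 0 <= Order.min p1 M11 + Order.min p2 M12)%R])%E.
Proof.
move=> h11 h12 h22 r1 r2 psd L1 L2 L3 hmu.
rewrite /std_gauss2.
have eM22 : M22 = M11 by lra.
have eM12 : M12 = 1 - M11 by lra.
have ha : 1/2 <= M11.
  have := psd 1 (-1); rewrite eM22 eM12; lra.
have ha1 : M11 <= 1 by lra.
set c1 := l11 - l21; set c2 := l12 - l22; set D := mu2 - mu1.
have hc : c1 ^+ 2 + c2 ^+ 2 = 4 * M11 - 2.
  rewrite /c1 /c2; nra.
set r := Num.sqrt M11.
have r0 : 0 <= r by exact: sqrtr_ge0.
have rr : r ^+ 2 = M11 by rewrite sqr_sqrtr.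
have r1' : r <= 1 by nra.
have hD : 6 * r <= D by move: hmu; rewrite eM22 -/r /D; lra.
set B := [set g : R * R | expR (3 * D) <= expR (3 * c1 * g.1 + 3 * c2 * g.2)].
set E := [set g | _].
set P := (normal_prob (0:R) 1 \x normal_prob (0:R) 1)%E.
have mz : forall a b c : R, measurable_fun setT (fun g : R * R => a + b * g.1 + c * g.2).
  move=> a b c; apply: measurable_funD; first apply: measurable_funD => //.
    by apply: measurable_funM => //; exact: measurable_fst.
  by apply: measurable_funM => //; exact: measurable_snd.
have [ms1 ms2] := meas_sm _ _ _ _ (mz mu1 l11 l12) (mz mu2 l21 l22).
have mE : measurable E.
  have h : measurable_fun setT (fun g : R * R =>
     (Num.min (softmax1 (mu1 + l11 * g.1 + l12 * g.2) (mu2 + l21 * g.1 + l22 * g.2)) 1 +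
      Num.min (softmax2 (mu1 + l11 * g.1 + l12 * g.2) (mu2 + l21 * g.1 + l22 * g.2)) 0 <=
      Num.min (softmax1 (mu1 + l11 * g.1 + l12 * g.2) (mu2 + l21 * g.1 + l22 * g.2)) M11 +
      Num.min (softmax2 (mu1 + l11 * g.1 + l12 * g.2) (mu2 + l21 * g.1 + l22 * g.2)) M12)%R).
    apply: measurable_fun_ler; apply: measurable_funD; apply: measurable_minr => //.
  have := h measurableT [set true]; rewrite setTI; apply; done.
have mf : measurable_fun setT (fun g : R * R => (expR (3 * c1 * g.1 + 3 * c2 * g.2))%:E).
  apply/measurable_EFinP; apply: measurableT_comp; first exact: measurable_expR.
  have := mz 0 (3 * c1) (3 * c2).
  by under eq_fun do rewrite add0r.
have mB : measurable B.
  have h : measurable_fun setT (fun g : R * R =>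
      (expR (3 * D) <= expR (3 * c1 * g.1 + 3 * c2 * g.2))%R).
    apply: measurable_fun_ler => //.
    apply: measurableT_comp; first exact: measurable_expR.
    have := mz 0 (3 * c1) (3 * c2).
    by under eq_fun do rewrite add0r.
  have := h measurableT [set true]; rewrite setTI; apply; done.
have sub : ~` B `<=` E.
  move=> g /= /negP; rewrite -ltNge ltr_expR => hlt.
  apply: pointwise; last by rewrite eM12; lra.
  - have -> : mu1 + l11 * g.1 + l12 * g.2 =
              (mu2 + l21 * g.1 + l22 * g.2) + (c1 * g.1 + c2 * g.2 - D).
      by rewrite /c1 /c2 /D; ring.
    lra.
  - lra.
have [p ep] : exists p, P B = p%:E.
  exists (fine (P B)); rewrite fineK// ge0_fin_numE ?measure_ge0//.
  exact: (le_lt_trans (probability_le1 P mB) (ltry 1)).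
have p0 : 0 <= p by rewrite -lee_fin -ep measure_ge0.
have hint : ((expR (3 * D))%:E * P B <= (expR (9 * (2 * M11 - 1)))%:E)%E.
  rewrite -(integral_cst P mB).
  apply: (@le_trans _ _ (\int[P]_(g in B) (expR (3 * c1 * g.1 + 3 * c2 * g.2))%:E)%E).
    apply: ge0_le_integral => //.
    - by move=> g Bg /=; rewrite lee_fin.
    - exact: measurable_funTS.
  apply: (@le_trans _ _ (\int[P]_g (expR (3 * c1 * g.1 + 3 * c2 * g.2))%:E)%E).
    by apply: ge0_subset_integral => //.
  rewrite mgf2 lee_fin ler_expR !exprMn; lra.
rewrite ep -EFinM lee_fin in hint.
have hp : p <= expR (-9 : R).
  have h1 : expR (9 * (2 * M11 - 1)) <= expR (3 * D) * expR (-9 : R).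
    rewrite -expRD ler_expR; nra.
  have e3 := expR_gt0 (3 * D).
  rewrite -(ler_pM2l e3); lra.
have h9 : 200 <= expR (9:R).
  have := @expR_ge1Dxn R 9 3 (ler0n _ 9).
  rewrite (_ : (3.+1)`!%:R = 24 :> R) //; lra.
have hi : expR (-9 : R) * expR (9:R) = 1 by rewrite -expRD addNr expR0.
have hm9 : expR (-9 : R) <= 54 / 10000.
  have : expR (-9 : R) * 200 <= 1 :> R by rewrite -[X in _ <= X]hi ler_pM2l ?expR_gt0.
  lra.
have hle : (P (~` B) <= P E)%E.
  by apply: le_measure => //; rewrite inE //; exact: measurableC.
have hC : P (~` B) = (1 - P B)%E := probability_setC P mB.
move: hle; rewrite hC ep -EFinB; apply: le_trans.
rewrite lee_fin; lra.
Qed.
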